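(* Let $n\ge1$ and let $\phi_n$ be the basic limit function of $S_n$. Then $$0<\phi_n(-2n+2)<\phi_n(-2n+3)<\cdots<\phi_n(-1)<\phi_n(0),$$ and moreover $$\phi_n(-n)=\frac{n-1}{2n-1}\,\phi_n(0).$$
   Context: For an integer $n\ge1$, the subdivision scheme $S_n$ acts on real sequences $\mathbf f^k=(f^k_i)_{i\in\mathbb Z}$ (the value $f^k_i$ being associated with the dyadic point $2^{-k}i$) by the refinement rules $$f^{k+1}_{2i}=\frac1{2n-1}\sum_{j=-n+1}^{n-1}f^k_{i+j},\qquad f^{k+1}_{2i+1}=\frac1{2n}\sum_{j=-n+1}^{n}f^k_{i+j}.$$ This scheme is convergent: for every bounded initial sequence $\mathbf f^0$ there is a continuous $F:\mathbb R\to\mathbb R$ with $\lim_{k\to\infty}\sup_i|f^k_i-F(2^{-k}i)|=0$. The basic limit function $\phi_n$ is the limit function generated from the initial data $\delta$, where $\delta_0=1$ and $\delta_i=0$ for $i\neq0$. *)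

(* Defs.v *)
From Stdlib Require Import Reals ZArith.
Open Scope R_scope.

Fixpoint zsum (a : Z) (len : nat) (f : Z -> R) : R :=
  match len with
  | O => 0
  | S m => f a + zsum (a + 1)%Z m f
  end.

(* One refinement step of S_n:
   f^{k+1}_{2i}   = 1/(2n-1) * sum_{j=-n+1}^{n-1} f^k_{i+j}
   f^{k+1}_{2i+1} = 1/(2n)   * sum_{j=-n+1}^{n}   f^k_{i+j} *)
Definition Sn_step (n : nat) (f : Z -> R) (i : Z) : R :=
  let j := (i / 2)%Z in
  if Z.even i
  then / (2 * INR n - 1) * zsum (j - Z.of_nat n + 1)%Z (2 * n - 1)%nat f
  else / (2 * INR n) * zsum (j - Z.of_nat n + 1)%Z (2 * n)%nat f.

Fixpoint Sn_iter (n : nat) (k : nat) (f : Z -> R) : Z -> R :=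
  match k with
  | O => f
  | S k' => Sn_step n (Sn_iter n k' f)
  end.

Definition delta (i : Z) : R := if Z.eqb i 0 then 1 else 0.

Definition is_limit_function (n : nat) (f0 : Z -> R) (F : R -> R) : Prop :=
  forall eps : R, 0 < eps -> exists K : nat, forall k : nat, (K <= k)%nat ->
    forall i : Z, Rabs (Sn_iter n k f0 i - F (IZR i / 2 ^ k)) <= eps.

Definition is_basic_limit_function (n : nat) (phi : R -> R) : Prop :=
  continuity phi /\ is_limit_function n delta phi.

(* Main.v *)
Require Import Defs.
From Stdlib Require Import Reals ZArith Lia Lra.
Open Scope R_scope.

Lemma abs_iff (x e : R) : Rabs x <= e <-> - e <= x <= e.
Proof. unfold Rabs; destruct (Rcase_abs x); split; intros; lra. Qed.

Lemma zsum_ext a len f g :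
  (forall t, (a <= t < a + Z.of_nat len)%Z -> f t = g t) ->
  zsum a len f = zsum a len g.
Proof.
  revert a; induction len as [|l IH]; intros a H; simpl; [reflexivity|].
  rewrite (H a) by lia. f_equal. apply IH. intros t Ht. apply H. lia.
Qed.

Lemma zsum_plus a len f g :
  zsum a len (fun t => f t + g t) = zsum a len f + zsum a len g.
Proof. revert a; induction len; intros a; simpl; [lra|]. rewrite IHlen; lra. Qed.

Lemma zsum_scal a len c f :
  c * zsum a len f = zsum a len (fun t => c * f t).
Proof. revert a; induction len; intros a; simpl; [lra|]. rewrite <- IHlen; lra. Qed.

Lemma zsum_zero a len f :
  (forall t, (a <= t < a + Z.of_nat len)%Z -> f t = 0) -> zsum a len f = 0.
Proof.
  intro H. transitivity (zsum a len (fun _ => 0)).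
  - apply zsum_ext; auto.
  - clear H. revert a; induction len; intros a; simpl; [lra|]. rewrite IHlen; lra.
Qed.

Lemma zsum_nonneg a len f :
  (forall t, (a <= t < a + Z.of_nat len)%Z -> 0 <= f t) -> 0 <= zsum a len f.
Proof.
  revert a; induction len as [|l IH]; intros a H; simpl; [lra|].
  assert (0 <= f a) by (apply H; lia).
  assert (0 <= zsum (a+1) l f) by (apply IH; intros; apply H; lia). lra.
Qed.

Lemma zsum_ge_term a len f t0 :
  (forall t, (a <= t < a + Z.of_nat len)%Z -> 0 <= f t) ->
  (a <= t0 < a + Z.of_nat len)%Z -> f t0 <= zsum a len f.
Proof.
  revert a; induction len as [|l IH]; intros a H Ht; simpl; [lia|].
  destruct (Z.eq_dec t0 a) as [->|Hne].
  - assert (0 <= zsum (a+1) l f) by (apply zsum_nonneg; intros; apply H; lia). lra.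
  - assert (0 <= f a) by (apply H; lia).
    assert (f t0 <= zsum (a+1) l f) by (apply IH; [intros; apply H; lia| lia]). lra.
Qed.

Lemma zsum_le_const a len f M :
  (forall t, (a <= t < a + Z.of_nat len)%Z -> f t <= M) -> zsum a len f <= INR len * M.
Proof.
  revert a; induction len as [|l IH]; intros a H; simpl zsum; [simpl; lra|].
  rewrite S_INR.
  assert (f a <= M) by (apply H; lia).
  assert (zsum (a+1) l f <= INR l * M) by (apply IH; intros; apply H; lia). lra.
Qed.

Lemma zsum_const1 a len f :
  (forall t, (a <= t < a + Z.of_nat len)%Z -> f t = 1) -> zsum a len f = INR len.
Proof.
  revert a; induction len as [|l IH]; intros a H; simpl zsum; [simpl; lra|].
  rewrite S_INR. rewrite (H a) by lia. rewrite IH by (intros; apply H; lia). lra.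
Qed.

Lemma zsum_last a len f : zsum a (S len) f = zsum a len f + f (a + Z.of_nat len)%Z.
Proof.
  revert a; induction len as [|l IH]; intros a.
  - simpl. replace (a+0)%Z with a by lia. lra.
  - change (zsum a (S (S l)) f) with (f a + zsum (a+1) (S l) f).
    rewrite IH. simpl. replace (a + 1 + Z.of_nat l)%Z with (a + Z.pos (Pos.of_succ_nat l))%Z by lia.
    lra.
Qed.

Lemma zsum_app a l1 l2 f :
  zsum a (l1 + l2) f = zsum a l1 f + zsum (a + Z.of_nat l1) l2 f.
Proof.
  revert a; induction l1 as [|l IH]; intros a; simpl.
  - replace (a+0)%Z with a by lia. lra.
  - rewrite IH. replace (a + 1 + Z.of_nat l)%Z with (a + Z.pos (Pos.of_succ_nat l))%Z by lia. lra.
Qed.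

Lemma zsum_shift a len f c :
  zsum a len (fun t => f (t + c)%Z) = zsum (a + c) len f.
Proof.
  revert a; induction len as [|l IH]; intros a; simpl; [reflexivity|].
  rewrite IH. replace (a + 1 + c)%Z with (a + c + 1)%Z by lia. reflexivity.
Qed.

Lemma zsum_refl a len f c :
  zsum a len (fun t => f (c - t)%Z) = zsum (c - a - Z.of_nat len + 1) len f.
Proof.
  revert a; induction len as [|l IH]; intros a; [reflexivity|].
  change (zsum a (S l) (fun t => f (c - t)%Z)) with (f (c - a)%Z + zsum (a+1) l (fun t => f (c - t)%Z)).
  rewrite IH, zsum_last.
  replace (c - (a + 1) - Z.of_nat l + 1)%Z with (c - a - Z.of_nat (S l) + 1)%Z by lia.
  replace (c - a - Z.of_nat (S l) + 1 + Z.of_nat l)%Z with (c - a)%Z by lia. lra.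
Qed.

Lemma zsum_swap a l1 b l2 (F : Z -> Z -> R) :
  zsum a l1 (fun u => zsum b l2 (fun j => F u j)) =
  zsum b l2 (fun j => zsum a l1 (fun u => F u j)).
Proof.
  revert a; induction l1 as [|l IH]; intros a; simpl.
  - symmetry. apply zsum_zero. intros; reflexivity.
  - rewrite IH. rewrite <- zsum_plus. reflexivity.
Qed.

Lemma zsum_diff a len u v e :
  (forall t, (a <= t < a + Z.of_nat len)%Z -> Rabs (u t - v t) <= e) ->
  Rabs (zsum a len u - zsum a len v) <= INR len * e.
Proof.
  revert a; induction len as [|l IH]; intros a H; simpl zsum.
  - simpl. rewrite Rminus_0_r, Rabs_R0. lra.
  - rewrite S_INR.
    assert (H1 := H a ltac:(lia)).
    assert (H2 : Rabs (zsum (a+1) l u - zsum (a+1) l v) <= INR l * e) by (apply IH; intros; apply H; lia).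
    apply abs_iff in H1. apply abs_iff in H2. apply abs_iff. lra.
Qed.

Lemma zsum_delta a len i :
  (a <= i < a + Z.of_nat len)%Z -> zsum a len (fun j => delta (i - j)%Z) = 1.
Proof.
  revert a; induction len as [|l IH]; intros a H; simpl; [lia|].
  destruct (Z.eq_dec i a) as [->|Hne].
  - unfold delta at 1. rewrite Z.sub_diag. simpl.
    rewrite zsum_zero; [lra|]. intros t Ht. unfold delta.
    destruct (Z.eqb_spec (a - t) 0); [lia|reflexivity].
  - rewrite IH by lia. unfold delta at 1. destruct (Z.eqb_spec (i-a) 0); [lia|lra].
Qed.

Lemma zsum_shift_sub a len f c :
  zsum a len (fun t => f (t - c)%Z) = zsum (a - c) len f.
Proof.
  replace (a - c)%Z with (a + - c)%Z by lia. rewrite <- (zsum_shift a len f (- c)).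
  apply zsum_ext. intros; f_equal; lia.
Qed.

Lemma zsum_diff_shift a L f :
  zsum (a - 1) (S L) f - zsum a (S L) f = f (a - 1)%Z - f (a + Z.of_nat L)%Z.
Proof.
  rewrite (zsum_last a L f). change (zsum (a - 1) (S L) f) with (f (a-1)%Z + zsum (a - 1 + 1) L f).
  replace (a - 1 + 1)%Z with a by lia. lra.
Qed.

Section S.
Variable n : nat.
Hypothesis Hn : (1 <= n)%nat.
Let N := Z.of_nat n.
Let c1 := / (2 * INR n - 1).
Let c2 := / (2 * INR n).

Lemma INRn1 : 1 <= INR n.
Proof. apply (le_INR 1 n) in Hn. simpl in Hn. exact Hn. Qed.

Lemma c1_pos : 0 < c1.
Proof. unfold c1. apply Rinv_0_lt_compat. pose proof INRn1. lra. Qed.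
Lemma c2_pos : 0 < c2.
Proof. unfold c2. apply Rinv_0_lt_compat. pose proof INRn1. lra. Qed.
Lemma c2_le_c1 : c2 <= c1.
Proof. unfold c1, c2. pose proof INRn1. apply Rinv_le_contravar; lra. Qed.
Lemma L1_INR : INR (2 * n - 1) = 2 * INR n - 1.
Proof. rewrite minus_INR by lia. rewrite mult_INR. simpl. lra. Qed.
Lemma L2_INR : INR (2 * n) = 2 * INR n.
Proof. rewrite mult_INR. simpl. lra. Qed.
Lemma L1_Z : Z.of_nat (2 * n - 1) = (2 * N - 1)%Z.
Proof. unfold N. lia. Qed.
Lemma L2_Z : Z.of_nat (2 * n) = (2 * N)%Z.
Proof. unfold N. lia. Qed.

Lemma step_even g q :
  Sn_step n g (2 * q)%Z = c1 * zsum (q - N + 1) (2 * n - 1) g.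
Proof.
  unfold Sn_step. rewrite Z.even_even.
  replace (2 * q / 2)%Z with q by (rewrite Z.mul_comm, Z.div_mul; lia). reflexivity.
Qed.

Lemma step_odd g q :
  Sn_step n g (2 * q + 1)%Z = c2 * zsum (q - N + 1) (2 * n) g.
Proof.
  unfold Sn_step. rewrite Z.even_odd.
  replace ((2 * q + 1) / 2)%Z with q. reflexivity.
  rewrite Z.mul_comm, Z.div_add_l by lia. change (1/2)%Z with 0%Z. lia.
Qed.

Lemma parity (i : Z) : exists q, i = (2 * q)%Z \/ i = (2 * q + 1)%Z.
Proof. destruct (Z.Even_or_Odd i) as [[q Hq]|[q Hq]]; exists q; auto. Qed.

Lemma step_ext g h : (forall i, g i = h i) -> forall i, Sn_step n g i = Sn_step n h i.
Proof.
  intros H i. unfold Sn_step. destruct (Z.even i); f_equal; apply zsum_ext; auto.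
Qed.

Lemma step_lin A len (G : Z -> Z -> R) i :
  Sn_step n (fun i => zsum A len (fun j => G j i)) i = zsum A len (fun j => Sn_step n (G j) i).
Proof.
  unfold Sn_step. destruct (Z.even i); rewrite zsum_swap, zsum_scal; reflexivity.
Qed.

Lemma step_add g h i : Sn_step n (fun i => g i + h i) i = Sn_step n g i + Sn_step n h i.
Proof. unfold Sn_step. destruct (Z.even i); rewrite zsum_plus; lra. Qed.

Lemma step_scal c g i : Sn_step n (fun i => c * g i) i = c * Sn_step n g i.
Proof. unfold Sn_step. destruct (Z.even i); rewrite <- zsum_scal; lra. Qed.

Lemma step_shift g d i : Sn_step n (fun i => g (i - d)%Z) i = Sn_step n g (i - 2 * d)%Z.
Proof.
  destruct (parity i) as [q [-> | ->]].
  - replace (2 * q - 2 * d)%Z with (2 * (q - d))%Z by lia.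
    rewrite !step_even. f_equal. rewrite zsum_shift_sub. f_equal. lia.
  - replace (2 * q + 1 - 2 * d)%Z with (2 * (q - d) + 1)%Z by lia.
    rewrite !step_odd. f_equal. rewrite zsum_shift_sub. f_equal. lia.
Qed.

Lemma step_nonneg g : (forall i, 0 <= g i) -> forall i, 0 <= Sn_step n g i.
Proof.
  intros H i. destruct (parity i) as [q [-> | ->]].
  - rewrite step_even. pose proof c1_pos. apply Rmult_le_pos; [lra|]. apply zsum_nonneg; auto.
  - rewrite step_odd. pose proof c2_pos. apply Rmult_le_pos; [lra|]. apply zsum_nonneg; auto.
Qed.

Lemma step_sym g : (forall i, g (- i)%Z = g i) -> forall i, Sn_step n g (- i)%Z = Sn_step n g i.
Proof.
  intros H i. destruct (parity i) as [q [-> | ->]].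
  - replace (- (2 * q))%Z with (2 * (- q))%Z by lia. rewrite !step_even. f_equal.
    rewrite <- (zsum_ext _ _ (fun t => g (0 - t)%Z)) by (intros; rewrite <- H; f_equal; lia).
    rewrite zsum_refl. f_equal. rewrite L1_Z. lia.
  - replace (- (2 * q + 1))%Z with (2 * (- q - 1) + 1)%Z by lia. rewrite !step_odd. f_equal.
    rewrite <- (zsum_ext _ _ (fun t => g (0 - t)%Z)) by (intros; rewrite <- H; f_equal; lia).
    rewrite zsum_refl. f_equal. rewrite L2_Z. lia.
Qed.

Lemma step_supp g B : (forall i, (B < Z.abs i)%Z -> g i = 0) ->
  forall i, (2 * B + 2 * N - 1 < Z.abs i)%Z -> Sn_step n g i = 0.
Proof.
  intros H i Hi. destruct (parity i) as [q [-> | ->]].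
  - rewrite step_even, zsum_zero; [lra|]. intros t Ht. rewrite L1_Z in Ht. apply H. lia.
  - rewrite step_odd, zsum_zero; [lra|]. intros t Ht. rewrite L2_Z in Ht. apply H. lia.
Qed.

Lemma step_one g : (forall i, (Z.abs i <= 2 * N - 1)%Z -> g i = 1) ->
  forall i, (Z.abs i <= 2 * N - 1)%Z -> Sn_step n g i = 1.
Proof.
  intros H i Hi. pose proof INRn1. destruct (parity i) as [q [-> | ->]].
  - rewrite step_even, zsum_const1.
    + unfold c1. rewrite L1_INR. field. lra.
    + intros t Ht. rewrite L1_Z in Ht. apply H. lia.
  - rewrite step_odd, zsum_const1.
    + unfold c2. rewrite L2_INR. field. lra.
    + intros t Ht. rewrite L2_Z in Ht. apply H. lia.
Qed.

Lemma step_delta i :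
  Sn_step n delta i = zsum (1 - N) (2 * n - 1) (fun t => c1 * delta (i - 2 * t)%Z)
                    + zsum (- N) (2 * n) (fun t => c2 * delta (i - (2 * t + 1))%Z).
Proof.
  destruct (parity i) as [q [-> | ->]].
  - rewrite step_even.
    rewrite (zsum_zero (- N)). 2:{ intros t _. unfold delta. destruct (Z.eqb_spec (2 * q - (2 * t + 1)) 0); [lia|lra]. }
    rewrite Rplus_0_r, <- zsum_scal. f_equal.
    rewrite (zsum_ext _ _ (fun t => delta (2 * q - 2 * t)%Z) (fun t => delta (q - t)%Z)).
    2:{ intros t _. unfold delta. destruct (Z.eqb_spec (q - t) 0), (Z.eqb_spec (2 * q - 2 * t) 0); lia || reflexivity. }
    rewrite zsum_refl. f_equal. rewrite L1_Z. lia.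
  - rewrite step_odd.
    rewrite (zsum_zero (1 - N)). 2:{ intros t _. unfold delta. destruct (Z.eqb_spec (2 * q + 1 - 2 * t) 0); [lia|lra]. }
    rewrite Rplus_0_l, <- zsum_scal. f_equal.
    rewrite (zsum_ext _ _ (fun t => delta (2 * q + 1 - (2 * t + 1))%Z) (fun t => delta (q - t)%Z)).
    2:{ intros t _. unfold delta. destruct (Z.eqb_spec (q - t) 0), (Z.eqb_spec (2 * q + 1 - (2 * t + 1)) 0); lia || reflexivity. }
    rewrite zsum_refl. f_equal. rewrite L2_Z. lia.
Qed.

End S.

Definition P (k : nat) : Z := (2 ^ Z.of_nat k)%Z.
Lemma P_S k : P (S k) = (2 * P k)%Z.
Proof. unfold P. rewrite Nat2Z.inj_succ, Z.pow_succ_r by lia. reflexivity. Qed.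
Lemma P_pos k : (1 <= P k)%Z.
Proof. induction k. reflexivity. rewrite P_S. lia. Qed.
Lemma P_IZR k : IZR (P k) = 2 ^ k.
Proof. unfold P. rewrite <- pow_IZR. reflexivity. Qed.

Section I.
Variable n : nat.
Hypothesis Hn : (1 <= n)%nat.
Let N := Z.of_nat n.
Let c1 := / (2 * INR n - 1).
Let c2 := / (2 * INR n).

Lemma iter_ext k g h : (forall i, g i = h i) -> forall i, Sn_iter n k g i = Sn_iter n k h i.
Proof.
  induction k; intros H i; simpl; auto. apply step_ext. intros; apply IHk; auto.
Qed.

Lemma iter_succ k f : Sn_iter n (S k) f = Sn_iter n k (Sn_step n f).
Proof. induction k; simpl; [reflexivity|]. simpl in IHk. rewrite IHk. reflexivity. Qed.

Lemma iter_lin k A len (G : Z -> Z -> R) i :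
  Sn_iter n k (fun i => zsum A len (fun j => G j i)) i = zsum A len (fun j => Sn_iter n k (G j) i).
Proof.
  revert i; induction k; intros i; simpl; [reflexivity|].
  rewrite (step_ext _ _ (fun i => zsum A len (fun j => Sn_iter n k (G j) i))) by auto.
  apply step_lin.
Qed.

Lemma iter_add k g h i : Sn_iter n k (fun i => g i + h i) i = Sn_iter n k g i + Sn_iter n k h i.
Proof.
  revert i; induction k; intros i; simpl; [reflexivity|].
  rewrite (step_ext _ _ (fun i => Sn_iter n k g i + Sn_iter n k h i)) by auto.
  apply step_add.
Qed.

Lemma iter_scal k c g i : Sn_iter n k (fun i => c * g i) i = c * Sn_iter n k g i.
Proof.
  revert i; induction k; intros i; simpl; [reflexivity|].
  rewrite (step_ext _ _ (fun i => c * Sn_iter n k g i)) by auto.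
  apply step_scal.
Qed.

Lemma iter_shift k g d i : Sn_iter n k (fun i => g (i - d)%Z) i = Sn_iter n k g (i - P k * d)%Z.
Proof.
  revert i; induction k; intros i.
  - cbn [Sn_iter]. f_equal. change (P 0) with 1%Z. lia.
  - simpl.
    rewrite (step_ext _ _ (fun i => Sn_iter n k g (i - P k * d)%Z)) by auto.
    rewrite step_shift by exact Hn. f_equal. rewrite P_S. ring.
Qed.

Definition fk k := Sn_iter n k delta.

Lemma Q k i : fk (S k) i =
  c1 * zsum (1 - N) (2 * n - 1) (fun t => fk k (i - P k * (2 * t))%Z)
  + c2 * zsum (- N) (2 * n) (fun t => fk k (i - P k * (2 * t + 1))%Z).
Proof.
  unfold fk. rewrite iter_succ.
  rewrite (iter_ext _ _ _ (step_delta n Hn)).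
  rewrite iter_add.
  rewrite (iter_lin k (1 - N) (2 * n - 1) (fun t i => c1 * delta (i - 2 * t)%Z)).
  rewrite (iter_lin k (- N) (2 * n) (fun t i => c2 * delta (i - (2 * t + 1))%Z)).
  rewrite !zsum_scal. f_equal; apply zsum_ext; intros t _.
  - rewrite iter_scal. rewrite (iter_shift k delta (2 * t)). reflexivity.
  - rewrite iter_scal. rewrite (iter_shift k delta (2 * t + 1)). reflexivity.
Qed.

Lemma fk_nonneg k i : 0 <= fk k i.
Proof.
  unfold fk. revert i; induction k; intros i; simpl.
  - unfold delta. destruct (i =? 0)%Z; lra.
  - apply step_nonneg; auto.
Qed.

Lemma fk_sym k i : fk k (- i)%Z = fk k i.
Proof.
  unfold fk. revert i; induction k; intros i; simpl.
  - unfold delta. destruct (Z.eqb_spec (- i) 0), (Z.eqb_spec i 0); lia || reflexivity.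
  - apply step_sym; auto.
Qed.

Lemma fk_supp k i : ((P k - 1) * (2 * N - 1) < Z.abs i)%Z -> fk k i = 0.
Proof.
  unfold fk. revert i; induction k; intros i Hi; simpl.
  - unfold delta. unfold P in Hi. simpl in Hi. destruct (Z.eqb_spec i 0); [lia|reflexivity].
  - apply (step_supp n Hn _ ((P k - 1) * (2 * N - 1))%Z); auto.
    rewrite P_S in Hi. fold N. lia.
Qed.

Lemma fk_norm k :
  zsum (- (2 * N - 1)) (2 * (2 * n - 1) + 1) (fun j => fk k (- (P k * j))%Z) = 1.
Proof.
  set (chi := fun i => zsum (- (2 * N - 1)) (2 * (2 * n - 1) + 1) (fun j => delta (i - j)%Z)).
  assert (H1 : forall k i, (Z.abs i <= 2 * N - 1)%Z -> Sn_iter n k chi i = 1).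
  { induction k0; intros i Hi; simpl.
    - unfold chi. apply zsum_delta. lia.
    - apply step_one; auto. }
  rewrite <- (H1 k 0%Z) by lia. unfold chi.
  rewrite (iter_lin k _ _ (fun j i => delta (i - j)%Z)).
  apply zsum_ext. intros t _. rewrite iter_shift. unfold fk. f_equal.
Qed.

End I.

Section E.
Variable n : nat.
Hypothesis Hn : (1 <= n)%nat.
Let N := Z.of_nat n.
Let c1 := / (2 * INR n - 1).
Let c2 := / (2 * INR n).
Variable p : Z -> R.
Hypothesis Hnn : forall l, 0 <= p l.
Hypothesis Hsupp : forall l, (2 * N - 1 <= Z.abs l)%Z -> p l = 0.
Hypothesis Hsym : forall l, p (- l)%Z = p l.
Hypothesis Href : forall m, p m =
  c1 * zsum (1 - N) (2 * n - 1) (fun t => p (2 * m - 2 * t)%Z)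
  + c2 * zsum (- N) (2 * n) (fun t => p (2 * m - 2 * t - 1)%Z).
Variables (a0 : Z) (len0 : nat) (g0 : Z -> Z).
Hypothesis Hnorm : zsum a0 len0 (fun j => p (g0 j)) = 1.

Lemma E_diff m : p (m + 1)%Z - p m =
  c1 * (p (2 * m + 2 * N)%Z - p (2 * m - 2 * N + 2)%Z)
  + c2 * (p (2 * m + 2 * N + 1)%Z - p (2 * m - 2 * N + 1)%Z).
Proof.
  rewrite (Href (m + 1)), (Href m).
  set (A := fun t => p (2 * m - 2 * t)%Z).
  set (B := fun t => p (2 * m - 2 * t - 1)%Z).
  rewrite (zsum_ext _ _ (fun t => p (2 * (m + 1) - 2 * t)%Z) (fun t => A (t - 1)%Z))
    by (intros; unfold A; f_equal; lia).
  rewrite (zsum_ext _ _ (fun t => p (2 * (m + 1) - 2 * t - 1)%Z) (fun t => B (t - 1)%Z))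
    by (intros; unfold B; f_equal; lia).
  rewrite !zsum_shift_sub.
  fold (A) (B).
  assert (DA : zsum (1 - N - 1) (2 * n - 1) A - zsum (1 - N) (2 * n - 1) A
               = p (2 * m + 2 * N)%Z - p (2 * m - 2 * N + 2)%Z).
  { replace (2 * n - 1)%nat with (S (2 * n - 2)) by lia. rewrite zsum_diff_shift.
    unfold A. f_equal; f_equal; unfold N; lia. }
  assert (DB : zsum (- N - 1) (2 * n) B - zsum (- N) (2 * n) B
               = p (2 * m + 2 * N + 1)%Z - p (2 * m - 2 * N + 1)%Z).
  { replace (2 * n)%nat with (S (2 * n - 1)) by lia. rewrite zsum_diff_shift.
    unfold B. f_equal; f_equal; unfold N; lia. }
  rewrite <- DA, <- DB.
  ring.
Qed.

Lemma E_step m : (m <= -1)%Z ->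
  p (m + 1)%Z - p m = c1 * p (2 * m + 2 * N)%Z + c2 * p (2 * m + 2 * N + 1)%Z.
Proof.
  intro Hm. rewrite E_diff.
  rewrite (Hsupp (2 * m - 2 * N + 2)), (Hsupp (2 * m - 2 * N + 1)) by lia. ring.
Qed.

Lemma E_mono m : (m <= -1)%Z -> p m <= p (m + 1)%Z.
Proof.
  intro Hm. pose proof (E_step m Hm). pose proof (c1_pos n Hn). pose proof (c2_pos n Hn).
  fold c1 c2 in H0, H1.
  pose proof (Hnn (2 * m + 2 * N)%Z). pose proof (Hnn (2 * m + 2 * N + 1)%Z).
  assert (0 <= c1 * p (2 * m + 2 * N)%Z) by (apply Rmult_le_pos; lra).
  assert (0 <= c2 * p (2 * m + 2 * N + 1)%Z) by (apply Rmult_le_pos; lra).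
  lra.
Qed.

Lemma E_max l : p l <= p 0%Z.
Proof.
  assert (H : forall d : nat, p (- Z.of_nat d)%Z <= p 0%Z).
  { induction d. simpl. lra.
    pose proof (E_mono (- Z.of_nat (S d))%Z ltac:(lia)).
    replace (- Z.of_nat (S d) + 1)%Z with (- Z.of_nat d)%Z in H by lia. lra. }
  destruct (Z_le_gt_dec l 0).
  - replace l with (- Z.of_nat (Z.to_nat (- l)))%Z by lia. apply H.
  - rewrite <- Hsym. replace (- l)%Z with (- Z.of_nat (Z.to_nat l))%Z by lia. apply H.
Qed.

Lemma E_p0 : 0 < p 0%Z.
Proof.
  assert (H : zsum a0 len0 (fun j => p (g0 j)) <= INR len0 * p 0%Z)
    by (apply zsum_le_const; intros; apply E_max).
  pose proof (pos_INR len0). destruct (Rle_lt_dec (p 0%Z) 0); [|lra].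
  assert (INR len0 * p 0%Z <= 0) by nra. lra.
Qed.

Lemma E_lower m l : (2 * m - 2 * N + 1 <= l <= 2 * m + 2 * N - 1)%Z -> c2 * p l <= p m.
Proof.
  intro Hl. pose proof (c1_pos n Hn). pose proof (c2_pos n Hn). pose proof (c2_le_c1 n Hn).
  fold c1 c2 in H, H0, H1.
  rewrite (Href m).
  assert (S1 : 0 <= zsum (1 - N) (2 * n - 1) (fun t => p (2 * m - 2 * t)%Z)) by (apply zsum_nonneg; auto).
  assert (S2 : 0 <= zsum (- N) (2 * n) (fun t => p (2 * m - 2 * t - 1)%Z)) by (apply zsum_nonneg; auto).
  destruct (parity l) as [q [-> | ->]].
  - assert (T : p (2 * q)%Z <= zsum (1 - N) (2 * n - 1) (fun t => p (2 * m - 2 * t)%Z)).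
    { replace (2 * q)%Z with (2 * m - 2 * (m - q))%Z by lia.
      apply (zsum_ge_term _ _ (fun t => p (2 * m - 2 * t)%Z)); auto. rewrite L1_Z by exact Hn. fold N. lia. }
    pose proof (Hnn (2 * q)%Z). nra.
  - assert (T : p (2 * q + 1)%Z <= zsum (- N) (2 * n) (fun t => p (2 * m - 2 * t - 1)%Z)).
    { replace (2 * q + 1)%Z with (2 * m - 2 * (m - q - 1) - 1)%Z by lia.
      apply (zsum_ge_term _ _ (fun t => p (2 * m - 2 * t - 1)%Z)); auto. rewrite L2_Z by exact Hn. fold N. lia. }
    pose proof (Hnn (2 * q + 1)%Z). nra.
Qed.

Lemma E_pos_neg : forall d e : nat, (e <= d)%nat -> (Z.of_nat e <= 2 * N - 2)%Z -> 0 < p (- Z.of_nat e)%Z.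
Proof.
  pose proof (c2_pos n Hn) as Hc2. fold c2 in Hc2.
  induction d; intros e He He2.
  - replace e with 0%nat by lia. simpl. apply E_p0.
  - destruct (Nat.eq_dec e (S d)) as [->|Hne]; [|apply IHd; lia].
    set (m := (- Z.of_nat (S d))%Z).
    set (l := Z.min 0 (2 * m + 2 * N - 1)).
    pose proof (E_lower m l ltac:(unfold l, m; lia)).
    assert (0 < p l).
    { replace l with (- Z.of_nat (Z.to_nat (- l)))%Z by (unfold l; lia).
      apply IHd; unfold l, m in *; lia. }
    assert (0 < c2 * p l) by (apply Rmult_lt_0_compat; lra). lra.
Qed.

Lemma E_pos l : (Z.abs l <= 2 * N - 2)%Z -> 0 < p l.
Proof.
  intro Hl. destruct (Z_le_gt_dec l 0).
  - replace l with (- Z.of_nat (Z.to_nat (- l)))%Z by lia.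
    apply (E_pos_neg (Z.to_nat (- l))); lia.
  - rewrite <- Hsym. replace (- l)%Z with (- Z.of_nat (Z.to_nat l))%Z by lia.
    apply (E_pos_neg (Z.to_nat l)); lia.
Qed.

Lemma E_strict j : (- 2 * N + 2 <= j < 0)%Z -> p j < p (j + 1)%Z.
Proof.
  intro Hj. pose proof (E_step j ltac:(lia)).
  pose proof (c1_pos n Hn). pose proof (c2_pos n Hn). fold c1 c2 in H0, H1.
  pose proof (E_pos (2 * j + 2 * N)%Z ltac:(lia)).
  pose proof (Hnn (2 * j + 2 * N + 1)%Z).
  assert (0 < c1 * p (2 * j + 2 * N)%Z) by (apply Rmult_lt_0_compat; lra).
  assert (0 <= c2 * p (2 * j + 2 * N + 1)%Z) by (apply Rmult_le_pos; lra).
  lra.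
Qed.

Lemma E_final : p (- N)%Z = (INR n - 1) / (2 * INR n - 1) * p 0%Z.
Proof.
  set (A := fun t => p (2 * 0 - 2 * t)%Z).
  set (B := fun t => p (2 * 0 - 2 * t - 1)%Z).
  set (SA := zsum 1 (n - 1) A).
  set (SB := zsum 0 n B).
  assert (EA : zsum (1 - N) (2 * n - 1) (fun t => p (2 * (- N) - 2 * t)%Z) = SA).
  { rewrite (zsum_ext _ _ _ (fun t => A (t + N)%Z)) by (intros; unfold A; f_equal; lia).
    rewrite zsum_shift. replace (1 - N + N)%Z with 1%Z by lia.
    replace (2 * n - 1)%nat with (n - 1 + n)%nat by lia. rewrite zsum_app.
    rewrite (zsum_zero (1 + _)). 2:{ intros t Ht. unfold A. apply Hsupp. fold N in Ht.
      assert (Z.of_nat (n - 1) = N - 1)%Z by (unfold N; lia). lia. }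
    unfold SA. lra. }
  assert (EB : zsum (- N) (2 * n) (fun t => p (2 * (- N) - 2 * t - 1)%Z) = SB).
  { rewrite (zsum_ext _ _ _ (fun t => B (t + N)%Z)) by (intros; unfold B; f_equal; lia).
    rewrite zsum_shift. replace (- N + N)%Z with 0%Z by lia.
    replace (2 * n)%nat with (n + n)%nat by lia. rewrite zsum_app.
    rewrite (zsum_zero (0 + _)). 2:{ intros t Ht. unfold B. apply Hsupp. fold N in Ht. lia. }
    unfold SB. lra. }
  assert (FA : zsum (1 - N) (2 * n - 1) A = SA + p 0%Z + SA).
  { replace (2 * n - 1)%nat with (n - 1 + S (n - 1))%nat by lia. rewrite zsum_app.
    replace (1 - N + Z.of_nat (n - 1))%Z with 0%Z by (unfold N; lia).
    change (zsum 0 (S (n - 1)) A) with (A 0%Z + zsum (0 + 1) (n - 1) A).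
    replace (A 0%Z) with (p 0%Z) by (unfold A; f_equal).
    rewrite (zsum_ext _ _ A (fun t => A (0 - t)%Z)) by (intros; unfold A; rewrite <- Hsym; f_equal; lia).
    rewrite zsum_refl. replace (0 - (1 - N) - Z.of_nat (n - 1) + 1)%Z with 1%Z by (unfold N; lia).
    unfold SA. simpl (0 + 1)%Z. lra. }
  assert (FB : zsum (- N) (2 * n) B = SB + SB).
  { replace (2 * n)%nat with (n + n)%nat by lia. rewrite zsum_app.
    replace (- N + Z.of_nat n)%Z with 0%Z by (unfold N; lia).
    rewrite (zsum_ext _ _ B (fun t => B (- 1 - t)%Z)) by (intros; unfold B; rewrite <- Hsym; f_equal; lia).
    rewrite zsum_refl. replace (- 1 - - N - Z.of_nat n + 1)%Z with 0%Z by (unfold N; lia).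
    unfold SB. lra. }
  rewrite (Href (- N)%Z), EA, EB.
  pose proof (Href 0%Z) as H0. fold A B in H0. rewrite FA, FB in H0.
  assert (Hx : c1 * SA + c2 * SB = (p 0%Z - c1 * p 0%Z) / 2) by nra.
  rewrite Hx. unfold c1. pose proof (INRn1 n Hn). field. lra.
Qed.

End E.

Lemma eq_of_close x y C : 0 <= C -> (forall eps, 0 < eps -> Rabs (x - y) <= C * eps) -> x = y.
Proof.
  intros HC H. destruct (Req_dec x y) as [|Hne]; auto. exfalso.
  set (d := Rabs (x - y)).
  assert (Hd : 0 < d) by (unfold d; apply Rabs_pos_lt; lra).
  assert (He : 0 < d / (2 * (C + 1))) by (apply Rdiv_lt_0_compat; lra).
  specialize (H _ He). fold d in H.
  assert (C * (d / (2 * (C + 1))) < d).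
  { apply (Rmult_lt_reg_r (2 * (C + 1))); [lra|].
    replace (C * (d / (2 * (C + 1))) * (2 * (C + 1))) with (C * d) by (field; lra). nra. }
  lra.
Qed.

Section D.
Variable n : nat.
Hypothesis Hn : (1 <= n)%nat.
Let N := Z.of_nat n.
Let c1 := / (2 * INR n - 1).
Let c2 := / (2 * INR n).
Variable phi : R -> R.
Hypothesis Hlim : is_limit_function n delta phi.
Let p := fun l : Z => phi (IZR l).

Lemma conv eps : 0 < eps -> exists K, forall k, (K <= k)%nat -> forall m,
  Rabs (fk n k (P k * m)%Z - p m) <= eps.
Proof.
  intro He. destruct (Hlim eps He) as [K HK]. exists K. intros k Hk m.
  specialize (HK k Hk (P k * m)%Z). unfold fk, p.
  replace (IZR m) with (IZR (P k * m) / 2 ^ k); auto.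
  rewrite mult_IZR, P_IZR. field. apply pow_nonzero. lra.
Qed.

Lemma p_nonneg m : 0 <= p m.
Proof.
  destruct (Rle_lt_dec 0 (p m)) as [|Hlt]; auto. exfalso.
  destruct (conv (- p m / 2) ltac:(lra)) as [K HK].
  specialize (HK K (le_n _) m). apply abs_iff in HK.
  pose proof (fk_nonneg n Hn K (P K * m)%Z). lra.
Qed.

Lemma p_supp m : (2 * N - 1 <= Z.abs m)%Z -> p m = 0.
Proof.
  intro Hm. symmetry. apply (eq_of_close _ _ 1); [lra|]. intros eps He.
  destruct (conv eps He) as [K HK]. specialize (HK K (le_n _) m).
  rewrite (fk_supp n Hn K) in HK.
  - lra.
  - pose proof (P_pos K). rewrite Z.abs_mul, (Z.abs_eq (P K)) by lia. fold N. nia.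
Qed.

Lemma p_sym m : p (- m)%Z = p m.
Proof.
  apply (eq_of_close _ _ 2); [lra|]. intros eps He.
  destruct (conv eps He) as [K HK].
  pose proof (HK K (le_n _) m) as H1. pose proof (HK K (le_n _) (- m)%Z) as H2.
  replace (P K * - m)%Z with (- (P K * m))%Z in H2 by lia.
  rewrite (fk_sym n Hn) in H2. apply abs_iff in H1. apply abs_iff in H2. apply abs_iff. lra.
Qed.

Lemma p_norm : zsum (- (2 * N - 1)) (2 * (2 * n - 1) + 1) (fun j => p (- j)%Z) = 1.
Proof.
  symmetry. apply (eq_of_close _ _ (INR (2 * (2 * n - 1) + 1))); [apply pos_INR|].
  intros eps He. destruct (conv eps He) as [K HK].
  rewrite <- (fk_norm n Hn K). fold N.
  apply zsum_diff. intros t _. replace (- (P K * t))%Z with (P K * (- t))%Z by lia. apply HK. lia.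
Qed.

Lemma p_ref m : p m =
  c1 * zsum (1 - N) (2 * n - 1) (fun t => p (2 * m - 2 * t)%Z)
  + c2 * zsum (- N) (2 * n) (fun t => p (2 * m - 2 * t - 1)%Z).
Proof.
  pose proof (c1_pos n Hn) as Hc1. pose proof (c2_pos n Hn) as Hc2. fold c1 c2 in Hc1, Hc2.
  apply (eq_of_close _ _ (1 + c1 * INR (2 * n - 1) + c2 * INR (2 * n))).
  { pose proof (pos_INR (2 * n - 1)). pose proof (pos_INR (2 * n)). nra. }
  intros eps He. destruct (conv eps He) as [K HK].
  pose proof (HK (S K) ltac:(lia) m) as H0.
  rewrite (Q n Hn K) in H0. fold N c1 c2 in H0.
  rewrite (zsum_ext _ _ _ (fun t => fk n K (P K * (2 * m - 2 * t))%Z)) in H0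
    by (intros; f_equal; rewrite P_S; ring).
  rewrite (zsum_ext _ _ (fun t => fk n K (P (S K) * m - P K * (2 * t + 1))%Z)
     (fun t => fk n K (P K * (2 * m - 2 * t - 1))%Z)) in H0
    by (intros; f_equal; rewrite P_S; ring).
  set (X1 := zsum (1 - N) (2 * n - 1) (fun t => fk n K (P K * (2 * m - 2 * t))%Z)) in *.
  set (X2 := zsum (- N) (2 * n) (fun t => fk n K (P K * (2 * m - 2 * t - 1))%Z)) in *.
  set (Y1 := zsum (1 - N) (2 * n - 1) (fun t => p (2 * m - 2 * t)%Z)).
  set (Y2 := zsum (- N) (2 * n) (fun t => p (2 * m - 2 * t - 1)%Z)).
  assert (D1 : Rabs (X1 - Y1) <= INR (2 * n - 1) * eps) by (apply zsum_diff; intros; apply HK; lia).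
  assert (D2 : Rabs (X2 - Y2) <= INR (2 * n) * eps) by (apply zsum_diff; intros; apply HK; lia).
  apply abs_iff in H0. apply abs_iff in D1. apply abs_iff in D2. apply abs_iff.
  set (L1 := INR (2 * n - 1)) in *. set (L2 := INR (2 * n)) in *.
  assert (- (c1 * (L1 * eps)) <= c1 * (X1 - Y1) <= c1 * (L1 * eps)) by (split; nra).
  assert (- (c2 * (L2 * eps)) <= c2 * (X2 - Y2) <= c2 * (L2 * eps)) by (split; nra).
  split; nra.
Qed.

End D.

Theorem lemma3 (n : nat) (phi : R -> R) :
  (1 <= n)%nat ->
  is_basic_limit_function n phi ->
  (0 < phi (IZR (- 2 * Z.of_nat n + 2)) /\
   (forall j : Z, (- 2 * Z.of_nat n + 2 <= j < 0)%Z ->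
      phi (IZR j) < phi (IZR (j + 1)))) /\
  phi (- INR n) = (INR n - 1) / (2 * INR n - 1) * phi 0.
Proof.
  intros Hn [_ Hlim].
  set (p := fun l : Z => phi (IZR l)).
  pose proof (p_nonneg n Hn phi Hlim) as Hnn.
  pose proof (p_supp n Hn phi Hlim) as Hsupp.
  pose proof (p_sym n Hn phi Hlim) as Hsym.
  pose proof (p_ref n Hn phi Hlim) as Href.
  pose proof (p_norm n Hn phi Hlim) as Hnorm.
  split; [split|].
  - apply (E_pos n Hn p Hnn Hsupp Hsym Href _ _ _ Hnorm). lia.
  - intros j Hj. apply (E_strict n Hn p Hnn Hsupp Hsym Href _ _ _ Hnorm). exact Hj.
  - pose proof (E_final n Hn p Hsupp Hsym Href) as H.
    unfold p in H. rewrite opp_IZR, <- INR_IZR_INZ in H. exact H.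
Qed.
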